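(* Let $p,q$ be primes and $c,d\in\mathbb N$. In the algebra $(\mathbb N,\cdot,\mathbb N)$, $$p:q::_m c:d\iff (p=q\text{ and }c=d)\ \text{or}\ (p\neq q\text{ and }c=pu\text{ and }d=qu\text{ for some }u\in\mathbb N).$$
   Context: $(\mathbb N,\cdot,\mathbb N)$ is the algebra with universe the natural numbers $\mathbb N$, multiplication, and every natural number as a constant. A justification is a pair of terms $s\to t$ with the variables of $t$ among those of $s$; monolinear justifications are those where $s,t$ contain only one fixed variable $x$, occurring at most once in $s$ and at most once in $t$. $\uparrow^m(a\to b)$ is the set of monolinear justifications $s\to t$ with $a=s(\mathbf o)$, $b=t(\mathbf o)$ for some value $\mathbf o$; $\uparrow^m(a\to b:\!\cdot\,c\to d):=\uparrow^m(a\to b)\cap\uparrow^m(c\to d)$. A monolinear justification is trivial if it lies in all sets $\uparrow^m(a'\to b':\!\cdot\,c'\to d')$. $a\to b:\!\cdot_m\,c\to d$ holds iff either (i) all justifications in $\uparrow^m(a\to b)\cup\uparrow^m(c\to d)$ are trivial, or (ii) $J_d:=\uparrow^m(a\to b:\!\cdot\,c\to d)$ contains a non-trivial justification and for every $d'$, $J_d\subseteq J_{d'}$ implies $J_{d'}$ contains a non-trivial justification and $J_{d'}\subseteq J_d$ (ignoring trivial justifications). $a:b::_m c:d$ iff $a\to b:\!\cdot_m\,c\to d$, $b\to a:\!\cdot_m\,d\to c$, $c\to d:\!\cdot_m\,a\to b$, $d\to c:\!\cdot_m\,b\to a$ all hold. *)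

(* Defs.v *)
From mathcomp Require Import all_boot.
Set Implicit Arguments. Unset Strict Implicit. Unset Printing Implicit Defensive.

(* Terms of the algebra (N, ., N) in the single fixed variable x:
   the variable x, a constant for every natural number, and products. *)
Inductive term : Type :=
| TVar : term
| TCst : nat -> term
| TMul : term -> term -> term.

Fixpoint occ (t : term) : nat :=
  match t with
  | TVar => 1
  | TCst _ => 0
  | TMul u v => occ u + occ v
  end.

Fixpoint eval (t : term) (o : nat) : nat :=
  match t with
  | TVar => o
  | TCst n => n
  | TMul u v => eval u o * eval v o
  end.

(* a justification s -> t, represented as the pair (s, t) *)
Definition justification := (term * term)%type.

(* monolinear: x occurs at most once in s and at most once in t,
   and the variables of t are among those of s *)
Definition monolinear (j : justification) : Prop :=
  occ j.1 <= 1 /\ occ j.2 <= 1 /\ (0 < occ j.2 -> 0 < occ j.1).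

Definition up (a b : nat) (j : justification) : Prop :=
  monolinear j /\ exists o, eval j.1 o = a /\ eval j.2 o = b.

Definition up2 (a b c d : nat) (j : justification) : Prop :=
  up a b j /\ up c d j.

Definition trivial (j : justification) : Prop :=
  monolinear j /\ forall a' b' c' d', up2 a' b' c' d' j.

Definition subset_nt (A B : justification -> Prop) : Prop :=
  forall j, A j -> ~ trivial j -> B j.

Definition has_nontrivial (A : justification -> Prop) : Prop :=
  exists j, A j /\ ~ trivial j.

Definition arrow_prop (a b c d : nat) : Prop :=
  (forall j, (up a b j \/ up c d j) -> trivial j)
  \/
  (has_nontrivial (up2 a b c d) /\
   forall d', subset_nt (up2 a b c d) (up2 a b c d') ->
              has_nontrivial (up2 a b c d') /\
              subset_nt (up2 a b c d') (up2 a b c d)).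

Definition analogy (a b c d : nat) : Prop :=
  arrow_prop a b c d /\ arrow_prop b a d c /\
  arrow_prop c d a b /\ arrow_prop d c b a.

(* Main.v *)
Require Import Defs.
From mathcomp Require Import all_boot.

Fixpoint cf (t : term) : nat :=
  match t with
  | TVar => 1
  | TCst n => n
  | TMul u v => cf u * cf v
  end.

Lemma evalE t o : eval t o = cf t * o ^ occ t.
Proof.
elim: t => [|n|u IHu v IHv] /=; first by rewrite mul1n expn1.
  by rewrite expn0 muln1.
by rewrite IHu IHv expnD mulnACA.
Qed.

Lemma notriv j : ~ trivial j.
Proof.
case: j => s t [[m1 [m2 m3]] H] /=.
have [[_ [o [F1 E1]]] [_ [o' [_ E2]]]] := H 1 0 1 1.
move: E1 E2 F1 m1 m2 m3; rewrite /= !evalE.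
case: (occ t) => [|[|e2]] //=; case: (occ s) => [|[|e1]] //=; rewrite ?expn0 ?expn1 ?muln1.
- by move=> ->.
- by move=> ->.
- by move=> _ _ _ _ _ /(_ isT).
- move=> E1 /eqP; rewrite muln_eq1 => /andP [/eqP El _].
  by move: E1; rewrite El mul1n => ->; rewrite muln0.
Qed.

Lemma ap_ne a b c d : arrow_prop a b c d -> exists j, up2 a b c d j.
Proof.
case=> [H | [[j [Hj _]] _]]; last by exists j.
have Hu : up a b (TCst a, TCst b) by split; [rewrite /monolinear /=| exists 0].
by case: (@notriv _ (H _ (or_introl Hu))).
Qed.

Lemma L1 a b u v : 0 < a -> arrow_prop (a*v) (b*v) (a*u) (b*u).
Proof.
move=> a0; right.
set j := (TMul (TCst a) TVar, TMul (TCst b) TVar).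
have mj : monolinear j by rewrite /monolinear /=.
have Hj : up2 (a*v) (b*v) (a*u) (b*u) j.
  by split; split=> //; [exists v | exists u].
split; first by exists j; split=> //; apply: notriv.
move=> d' H; have [_ [_ [o /= [E1 E2]]]] := H j Hj (@notriv j).
have eo : o = u by apply/eqP; rewrite -(eqn_pmul2l a0); apply/eqP.
subst o; subst d'.
split; first by exists j; split=> //; apply: notriv.
by move=> j'.
Qed.

Lemma keyN p q c d j : prime p -> prime q -> up2 p q c d j ->
  (p = q /\ c = d) \/ (exists u, c = p * u /\ d = q * u) \/ d = q.
Proof.
move=> pp pq; case: j => s t [[[m1 [m2 m3]] [o1 [E1 E2]]] [_ [o2 [F1 F2]]]].
move: E1 E2 F1 F2 m1 m2 m3; rewrite /= !evalE.
case: (occ t) => [|[|e2]]; last by [].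
  by rewrite !expn0 !muln1 => _ <- _ <-; auto.
case: (occ s) => [|[|e1]]; [by move=> _ _ _ _ _ _ /(_ isT) | | by []].
rewrite !expn1 => E1 E2 F1 F2 _ _ _.
have : o1 %| p by rewrite -E1 dvdn_mull.
case/primeP: pp => p1 /[apply] /orP [] /eqP Eo; subst o1.
  by right; left; exists o2; rewrite -F1 -F2 -E1 -E2 !muln1.
have p0 : 0 < p by case: p p1 {E1 E2}.
have k1 : cf s = 1.
  by apply/eqP; rewrite -(eqn_pmul2r p0) mul1n E1.
have : p %| q by rewrite -E2 dvdn_mull.
case/primeP: pq => _ /[apply] /orP [] /eqP Ep.
  by move: p1; rewrite Ep.
rewrite -Ep in E2 *.
have l1 : cf t = 1.
  by apply/eqP; rewrite -(eqn_pmul2r p0) mul1n E2.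
by left; split=> //; rewrite -F1 -F2 k1 l1.
Qed.

Theorem mainTheorem11 (p q c d : nat) (hp : prime p) (hq : prime q) :
  analogy p q c d <->
  ((p = q /\ c = d) \/ (p <> q /\ exists u : nat, c = p * u /\ d = q * u)).
Proof.
have p0 : 0 < p by apply: prime_gt0.
have q0 : 0 < q by apply: prime_gt0.
split.
  case=> [H1 [H2 _]].
  have [j1 J1] := ap_ne _ _ _ _ H1; have [j2 J2] := ap_ne _ _ _ _ H2.
  have K1 := keyN _ _ _ _ _ hp hq J1; have K2 := keyN _ _ _ _ _ hq hp J2.
  case: (eqVneq p q) => [Epq | Npq].
    subst q; left; split=> //.
    case: K1 => [[_ ->] //|[[u [-> ->]] //|Ed]].
    case: K2 => [[_ ->] //|[[u [-> ->]] //|Ec]].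
    by rewrite Ed Ec.
  right; split; first by apply/eqP.
  case: K1 => [[E _]|[//|Ed]]; first by rewrite E eqxx in Npq.
  case: K2 => [[E _]|[[u [E1 E2]]|Ec]]; first by rewrite E eqxx in Npq.
    by exists u.
  by exists 1; rewrite !muln1.
case=> [[<- ->]|[_ [u [-> ->]]]].
  have A := L1 1 1 d p isT; have B := L1 1 1 p d isT; rewrite !mul1n in A B.
  by split; [|split; [|split]].
split; first by have := L1 p q u 1 p0; rewrite !muln1.
split; first by have := L1 q p u 1 q0; rewrite !muln1.
split; first by have := L1 p q 1 u p0; rewrite !muln1.
by have := L1 q p 1 u q0; rewrite !muln1.
Qed.
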